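(* Let $d\ge 2$ and $t,k$ be positive integers. Let $\mathcal{S}$ be a finite collection of spheres in $\mathbb{R}^d$ whose intersection graph $G=G(\mathcal{S})$ does not contain $K_{t,t}$ as a subgraph, and suppose every nested subset of $\mathcal{S}$ has size at most $k$. Then for every positive integer $r$, $\mathrm{scol}_r(G)\le 2kt(2r+2)^d$.
   Context: A sphere in $\mathbb{R}^d$ is the boundary of a closed ball of positive radius; $B(S)$ is the closed ball with boundary $S$. $G(\mathcal{S})$ has vertex set $\mathcal{S}$, two spheres adjacent iff they intersect. A sphere $S'$ contains a different sphere $S$ if $B(S)\subseteq B(S')$; a collection is nested if of any two of its spheres one contains the other. Given a linear order $\le$ on $V(G)$ and $v\in V(G)$, a vertex $u$ is strongly $r$-reachable from $v$ if $u\le v$ and there is a $v$–$u$ path of length at most $r$ in which $u$ is the only vertex smaller than $v$; the $r$-width of $\le$ is the maximum over $v$ of the number of vertices strongly $r$-reachable from $v$, and $\mathrm{scol}_r(G)$ is the minimum $r$-width over all linear orders of $V(G)$. *)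

(* Defs.v *)
From HB Require Import structures.
From mathcomp Require Import all_boot all_order all_algebra.
From mathcomp Require Import fingroup perm.
From mathcomp Require Import boolp reals.
Set Implicit Arguments. Unset Strict Implicit. Unset Printing Implicit Defensive.
Import Order.TTheory GRing.Theory Num.Theory.
Local Open Scope ring_scope.

Section Spheres.
Variables (R : realType) (d : nat) (V : finType).
(* A finite collection of spheres is indexed by V: sphere v has centre c v
   in R^d and radius rho v > 0. *)
Variables (c : V -> 'rV[R]_d) (rho : V -> R).

Definition dist2 (x y : 'rV[R]_d) : R := \sum_(i < d) (x ord0 i - y ord0 i) ^+ 2.

Definition spheres_meet (u v : V) : Prop :=
  exists x : 'rV[R]_d, dist2 x (c u) = rho u ^+ 2 /\ dist2 x (c v) = rho v ^+ 2.

Definition sphere_graph : rel V := fun u v => (u != v) && `[< spheres_meet u v >].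

Definition contains (v u : V) : Prop :=
  forall x : 'rV[R]_d, dist2 x (c u) <= rho u ^+ 2 -> dist2 x (c v) <= rho v ^+ 2.

Definition nested (A : {set V}) : Prop :=
  forall u v, u \in A -> v \in A -> u != v -> contains u v \/ contains v u.
End Spheres.

Section Graphs.
Variable V : finType.

Definition has_Ktt (e : rel V) (t : nat) : Prop :=
  exists A B : {set V}, [/\ #|A| = t, #|B| = t, [disjoint A & B] &
    forall a b, a \in A -> b \in B -> e a b].

(* A linear order on V is given by a permutation s : the position of x is
   enum_rank (s x); x <= y iff position x <= position y. Every linear order
   arises this way. *)
Definition pos (s : {perm V}) (x : V) : nat := enum_rank (s x).

(* u is strongly r-reachable from v w.r.t. the order s: u <= v and there is a
   path v = x_0, x_1, ..., x_m = u (m <= r, distinct vertices, consecutive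
   ones adjacent) in which every vertex other than u is >= v. *)
Definition sreach (e : rel V) (r : nat) (s : {perm V}) (v u : V) : bool :=
  (pos s u <= pos s v)%N &&
  [exists m : 'I_r.+1, exists p : m.-tuple V,
     [&& path e v p, last v p == u, uniq (v :: p) &
         all (fun x => pos s v <= pos s x)%N (belast v p)]].

Definition width (e : rel V) (r : nat) (s : {perm V}) : nat :=
  \max_(v : V) #|[set u | sreach e r s v u]|.

Definition scol (e : rel V) (r : nat) : nat :=
  \big[minn/#|V|]_(s : {perm V}) width e r s.
End Graphs.

(* Main.v *)
Require Import Defs.
From HB Require Import structures.
From mathcomp Require Import all_boot all_order all_algebra.
From mathcomp Require Import fingroup perm.
From mathcomp Require Import boolp reals.
From mathcomp Require Import ring lra zify.
Import Order.TTheory GRing.Theory Num.Theory.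
Local Open Scope ring_scope.
Set Implicit Arguments. Unset Strict Implicit. Unset Printing Implicit Defensive.
Section Geo.
Variables (R : realType) (d : nat).
Implicit Types (x y z : 'rV[R]_d) (a b : R).

Definition dot x y : R := \sum_(i < d) x ord0 i * y ord0 i.
Definition nrm2 x : R := dot x x.
Definition nrm x : R := Num.sqrt (nrm2 x).
Definition D x y : R := nrm (x - y).

Lemma dotC x y : dot x y = dot y x.
Proof. by apply: eq_bigr => i _; rewrite mulrC. Qed.

Lemma dot_lin a b x y z : dot (a *: x + b *: y) z = a * dot x z + b * dot y z.
Proof.
rewrite /dot !mulr_sumr -big_split /=; apply: eq_bigr => i _; rewrite !mxE; ring.
Qed.

Lemma dot_linr a b x y z : dot z (a *: x + b *: y) = a * dot z x + b * dot z y.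
Proof. by rewrite dotC dot_lin (dotC x) (dotC y). Qed.

Lemma nrm2_lin a b x y :
  nrm2 (a *: x + b *: y) = a ^+ 2 * nrm2 x + 2 * a * b * dot x y + b ^+ 2 * nrm2 y.
Proof.
rewrite /nrm2 /dot !mulr_sumr -!big_split /=; apply: eq_bigr => i _; rewrite !mxE; ring.
Qed.

Lemma nrm2_ge0 x : 0 <= nrm2 x.
Proof. by apply: sumr_ge0 => i _; rewrite -expr2 sqr_ge0. Qed.

Lemma sqge0 a : 0 <= a * a. Proof. by rewrite -expr2 sqr_ge0. Qed.

Lemma nrm2_eq0 x : nrm2 x = 0 -> x = 0.
Proof.
move=> h; apply/rowP => i; rewrite mxE.
have := @psumr_eq0P _ _ xpredT (fun i => x ord0 i * x ord0 i) (fun i _ => sqge0 (x ord0 i)) h i isT.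
by move/eqP; rewrite mulf_eq0 orbb => /eqP.
Qed.


Lemma nrm2Z a x : nrm2 (a *: x) = a ^+ 2 * nrm2 x.
Proof. by have := nrm2_lin a 0 x x; rewrite scale0r addr0 => ->; ring. Qed.

Lemma CS x y : dot x y ^+ 2 <= nrm2 x * nrm2 y.
Proof.
have := nrm2_ge0 (nrm2 y *: x + (- dot x y) *: y); rewrite nrm2_lin.
have [/nrm2_eq0 ->|yp] := eqVneq (nrm2 y) 0.
  move=> _; rewrite [dot x 0]/dot big1 ?expr0n /=; first by rewrite mulr_ge0 ?nrm2_ge0.
  by move=> i _; rewrite mxE mulr0.
have y0 : 0 < nrm2 y by rewrite lt_neqAle eq_sym yp nrm2_ge0.
move=> h; have : 0 <= nrm2 y * (nrm2 x * nrm2 y - dot x y ^+ 2) by nra.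
by rewrite pmulr_rge0 // subr_ge0.
Qed.

Lemma nrm_ge0 x : 0 <= nrm x. Proof. exact: sqrtr_ge0. Qed.
Lemma nrm_sqr x : nrm x ^+ 2 = nrm2 x. Proof. by rewrite sqr_sqrtr // nrm2_ge0. Qed.

Lemma dot_le x y : dot x y <= nrm x * nrm y.
Proof.
have h := CS x y; rewrite -!nrm_sqr -exprMn in h.
have := nrm_ge0 x; have := nrm_ge0 y => h1 h2.
have [le|lt] := leP (dot x y) 0; first by apply: le_trans le _; exact: mulr_ge0.
by rewrite -(ler_pXn2r (n:=2)) // ?nnegrE ?mulr_ge0 // ltW.
Qed.

Lemma nrmD x y : nrm (x + y) <= nrm x + nrm y.
Proof.
have h := dot_le x y.
rewrite -(ler_pXn2r (n:=2)) ?nnegrE ?addr_ge0 ?nrm_ge0 //.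
have e : x + y = 1 *: x + 1 *: y by rewrite !scale1r.
rewrite nrm_sqr e nrm2_lin -!nrm_sqr; nra.
Qed.

Lemma nrmZ a x : nrm (a *: x) = `|a| * nrm x.
Proof. by rewrite /nrm nrm2Z sqrtrM ?sqr_ge0 // sqrtr_sqr. Qed.

Lemma nrmN x : nrm (- x) = nrm x.
Proof. by rewrite -scaleN1r nrmZ normrN normr1 mul1r. Qed.

Lemma DC x y : D x y = D y x.
Proof. by rewrite /D -nrmN opprB. Qed.

Lemma D_ge0 x y : 0 <= D x y. Proof. exact: nrm_ge0. Qed.

Lemma Dtri x y z : D x z <= D x y + D y z.
Proof. by rewrite /D; apply: le_trans (nrmD _ _); rewrite addrA subrK. Qed.

Lemma dist2E x y : dist2 x y = nrm2 (x - y).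
Proof. by apply: eq_bigr => i _; rewrite !mxE expr2. Qed.

Lemma dist2D x y : dist2 x y = D x y ^+ 2.
Proof. by rewrite dist2E /D nrm_sqr. Qed.

Lemma dist2_le x y a : 0 <= a -> (dist2 x y <= a ^+ 2) = (D x y <= a).
Proof. by move=> a0; rewrite dist2D ler_pXn2r // ?nnegrE // D_ge0. Qed.

Lemma dist2_eq x y a : 0 <= a -> (dist2 x y = a ^+ 2) <-> (D x y = a).
Proof.
move=> a0; rewrite dist2D; split=> [h|->//].
by apply/eqP; rewrite -(eqrXn2 (n:=2)) // ?D_ge0 ?h.
Qed.

Lemma nrm_eq0 x : nrm x = 0 -> x = 0.
Proof. by move=> h; apply: nrm2_eq0; rewrite -nrm_sqr h expr0n. Qed.


Lemma dot_delta x (j : 'I_d) : dot x (delta_mx ord0 j) = x ord0 j.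
Proof.
rewrite /dot (bigD1 j) //= big1 ?addr0 => [|i ij]; rewrite !mxE.
  by rewrite !eqxx mulr1.
by rewrite (negbTE ij) andbF mulr0.
Qed.

Lemma unit_dir x : (0 < d)%N -> exists e, nrm2 e = 1 /\ x = nrm x *: e.
Proof.
move=> d0; have [x0|xn] := eqVneq (nrm x) 0.
  exists (delta_mx ord0 (Ordinal d0)); split; last by rewrite x0 scale0r (nrm_eq0 x0).
  by rewrite /nrm2 dot_delta mxE !eqxx.
have xp : 0 < nrm x by rewrite lt_neqAle eq_sym xn nrm_ge0.
exists ((nrm x)^-1 *: x); split; last by rewrite scalerA mulfV // scale1r.
by rewrite nrm2Z -nrm_sqr exprVn mulVf // expf_neq0.
Qed.

Lemma perp e : (2 <= d)%N -> nrm2 e = 1 -> exists f, nrm2 f = 1 /\ dot e f = 0.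
Proof.
move=> d2 e1.
have [i ei] : exists i, e ord0 i != 0.
  apply/existsP; apply: contraT; rewrite negb_exists => /forallP h.
  suff : nrm2 e = 0 by rewrite e1 => /eqP; rewrite oner_eq0.
  by rewrite /nrm2 /dot big1 // => i _; rewrite (eqP (negPn (h i))) mul0r.
have d0 : (0 < d)%N by apply: leq_trans d2.
pose i0 : 'I_d := Ordinal d0; pose i1 : 'I_d := Ordinal d2.
pose j := if i == i0 then i1 else i0.
have ji : j != i.
  rewrite /j; case: (eqVneq i i0) => [->|h]; last by rewrite eq_sym.
  by apply/eqP => /(congr1 val).
pose g : 'rV[R]_d := e ord0 j *: delta_mx ord0 i + (- e ord0 i) *: delta_mx ord0 j.
have dg : dot e g = 0 by rewrite dot_linr !dot_delta; ring.
have dij : dot (delta_mx ord0 i) (delta_mx ord0 j) = 0.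
  by rewrite dot_delta mxE (negbTE ji) andbF.
have ng : nrm2 g = e ord0 j ^+ 2 + e ord0 i ^+ 2.
  by rewrite nrm2_lin dij /nrm2 !dot_delta !mxE !eqxx /=; ring.
have gp : 0 < nrm2 g.
  have h1 : 0 < e ord0 i ^+ 2 by rewrite lt_neqAle eq_sym sqrf_eq0 ei sqr_ge0.
  have := sqr_ge0 (e ord0 j); rewrite ng; lra.
have [f [f1 gf]] := unit_dir g d0.
exists f; split => //.
have : dot e g = nrm g * dot e f.
  by rewrite {1}gf -[nrm g *: f]addr0 -(scale0r (nrm g *: f)) dot_linr; ring.
rewrite dg => /esym/eqP; rewrite mulf_eq0 => /orP[/eqP h|/eqP //].
by move: gp; rewrite -nrm_sqr h expr0n ltxx.
Qed.

Lemma ball_incl cu cw ru rw : (0 < d)%N -> 0 < ru -> 0 < rw ->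
  (forall x, dist2 x cu <= ru ^+ 2 -> dist2 x cw <= rw ^+ 2) ->
  D cu cw + ru <= rw.
Proof.
move=> d0 ru0 rw0 h.
have [e [e1 de]] := unit_dir (cu - cw) d0.
pose p := cu + ru *: e.
have hp : dist2 p cu <= ru ^+ 2.
  by rewrite dist2E /p addrC addKr nrm2Z e1 mulr1.
have := h p hp; rewrite dist2E.
have -> : p - cw = (D cu cw + ru) *: e.
  by rewrite /p /D scalerDl -de addrAC.
rewrite nrm2Z e1 mulr1 => hh.
have h0 := D_ge0 cu cw.
rewrite -(ler_pXn2r (n:=2)) ?nnegrE //; lra.
Qed.

Lemma ball_incl_conv cu cw ru rw : 0 <= ru -> D cu cw <= rw - ru ->
  (forall x, dist2 x cu <= ru ^+ 2 -> dist2 x cw <= rw ^+ 2).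
Proof.
move=> ru0 h x; have rw0 : 0 <= rw by have := D_ge0 cu cw; lra.
rewrite !dist2_le // => hx.
by apply: le_trans (Dtri x cu cw) _; lra.
Qed.


Lemma sphere_meet cu cw ru rw x : (2 <= d)%N -> 0 < ru -> 0 < rw ->
  dist2 x cu <= ru ^+ 2 -> dist2 x cw <= rw ^+ 2 ->
  ~ (forall y, dist2 y cu <= ru ^+ 2 -> dist2 y cw <= rw ^+ 2) ->
  ~ (forall y, dist2 y cw <= rw ^+ 2 -> dist2 y cu <= ru ^+ 2) ->
  exists p, dist2 p cu = ru ^+ 2 /\ dist2 p cw = rw ^+ 2.
Proof.
move=> d2 ru0 rw0 hxu hxw n1 n2.
have d0 : (0 < d)%N by apply: leq_trans d2.
have l1 : rw - ru < D cu cw.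
  by rewrite ltNge; apply/negP => h; apply: n1; apply: ball_incl_conv => //; apply: ltW.
have l2 : ru - rw < D cu cw.
  rewrite ltNge; apply/negP => h; apply: n2; apply: (ball_incl_conv (ltW rw0)).
  by rewrite DC.
have l3 : D cu cw <= ru + rw.
  rewrite (dist2_le _ _ (ltW ru0)) in hxu; rewrite (dist2_le _ _ (ltW rw0)) in hxw.
  have := Dtri cu x cw; have := DC x cu; lra.
set Dd := D cu cw in l1 l2 l3.
have Dp : 0 < Dd by lra.
have [e [e1 de]] := unit_dir (cw - cu) d0.
have [f [f1 ef]] := perp d2 e1.
have nD : nrm (cw - cu) = Dd by rewrite /Dd /D -opprB nrmN.
rewrite nD in de.
pose a := (Dd ^+ 2 + ru ^+ 2 - rw ^+ 2) / (2 * Dd).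
have hpos : 0 <= ru ^+ 2 - a ^+ 2.
  have -> : ru ^+ 2 - a ^+ 2 = ((rw - Dd + ru) * (rw + Dd - ru) * (Dd + ru - rw) * (Dd + ru + rw)) / (2 * Dd) ^+ 2.
    by rewrite /a; field; rewrite (gt_eqF Dp).
  apply: divr_ge0; last exact: sqr_ge0.
  by rewrite !mulr_ge0 //; lra.
pose h := Num.sqrt (ru ^+ 2 - a ^+ 2).
have h2 : h ^+ 2 = ru ^+ 2 - a ^+ 2 by rewrite sqr_sqrtr.
exists (cu + (a *: e + h *: f)); rewrite !dist2E; split.
  by rewrite addrC addKr nrm2_lin e1 f1 ef h2; ring.
have -> : cu + (a *: e + h *: f) - cw = (a - Dd) *: e + h *: f.
  apply/rowP => i; have := congr1 (fun m : 'rV[R]_d => m ord0 i) de.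
  rewrite !mxE => hi.
  have -> : cw ord0 i = cu ord0 i + Dd * e ord0 i by rewrite -hi; ring.
  ring.
by rewrite nrm2_lin e1 f1 ef h2 /a; field; rewrite (gt_eqF Dp).
Qed.

End Geo.
Section Lattice.
Variables (R : realType) (d : nat).
Hypothesis d0 : (0 < d)%N.

Definition IV := {ffun 'I_d -> int}.
Definition rv (y : IV) : 'rV[R]_d := \row_i (y i)%:~R.
Definition addIV (a b : IV) : IV := [ffun i => a i + b i].
Definition subIV (a b : IV) : IV := [ffun i => a i - b i].
Definition nz (y : IV) : R := nrm (rv y).

Definition Box (B : nat) := {ffun 'I_d -> 'I_(2 * B).+1}.
Definition toZ B (z : Box B) : IV := [ffun i => (z i : nat)%:Z - B%:Z].
Definition ofZ B (y : IV) : Box B := [ffun i => inord (absz (y i + B%:Z))].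
Definition inbox B (y : IV) := forall i, - (B%:Z) <= y i <= B%:Z.

Lemma toZK B y : inbox B y -> toZ (ofZ B y) = y.
Proof.
move=> h; apply/ffunP => i; rewrite !ffunE inordK.
  have /andP[h1 h2] := h i.
  by rewrite gez0_abs ?addrK // -lerBlDr sub0r.
have /andP[h1 h2] := h i.
rewrite ltnS; lia.
Qed.

Lemma toZ_inj B : injective (@toZ B).
Proof.
move=> z1 z2 h; apply/ffunP => i; have := congr1 (fun f : IV => f i) h.
by rewrite !ffunE => /addIr /eqP; rewrite eqz_nat => /eqP /val_inj.
Qed.

Definition cnt B (P : pred IV) := #|[set z : Box B | P (toZ z)]|.

Lemma cnt_le B B' (P Q : pred IV) (f : IV -> IV) :
  (forall y, Q y -> inbox B' y) -> {in P &, injective f} ->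
  (forall y, P y -> Q (f y)) -> (cnt B P <= cnt B' Q)%N.
Proof.
move=> hQ finj hPQ; rewrite /cnt.
pose g (z : Box B) : Box B' := ofZ B' (f (toZ z)).
rewrite -(card_in_imset (f := g)); last first.
  move=> z1 z2; rewrite !inE => h1 h2 /(congr1 (@toZ B')).
  rewrite /g (toZK (hQ _ (hPQ _ h1))) (toZK (hQ _ (hPQ _ h2))) => e.
  by apply: (@toZ_inj B); apply: finj.
apply: subset_leq_card; apply/subsetP => y /imsetP[z]; rewrite inE => hz ->.
by rewrite inE /g (toZK (hQ _ (hPQ _ hz))) hPQ.
Qed.

Lemma cnt_le_mul B B' M (P Q : pred IV) (f : IV -> IV * {ffun 'I_d -> 'I_M}) :
  (forall y, Q y -> inbox B' y) -> {in P &, injective f} ->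
  (forall y, P y -> Q (f y).1) -> (cnt B P <= cnt B' Q * M ^ d)%N.
Proof.
move=> hQ finj hPQ; rewrite /cnt.
pose g (z : Box B) : Box B' * {ffun 'I_d -> 'I_M} := (ofZ B' (f (toZ z)).1, (f (toZ z)).2).
rewrite -(card_in_imset (f := g)); last first.
  move=> z1 z2; rewrite !inE => h1 h2 [] /(congr1 (@toZ B')).
  rewrite /g (toZK (hQ _ (hPQ _ h1))) (toZK (hQ _ (hPQ _ h2))) => e1 e2.
  by apply: (@toZ_inj B); apply: finj => //; apply: injective_projections.
have -> : (M ^ d)%N = #|[set: {ffun 'I_d -> 'I_M}]| by rewrite cardsT card_ffun !card_ord.
rewrite -cardsX; apply: subset_leq_card; apply/subsetP => y /imsetP[z]; rewrite inE => hz ->.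
by rewrite !inE /= /g (toZK (hQ _ (hPQ _ hz))) hPQ.
Qed.

Lemma rv_sub a b : rv (subIV a b) = rv a - rv b.
Proof. by apply/rowP => i; rewrite !mxE ffunE rmorphB. Qed.

Lemma rv_add a b : rv (addIV a b) = rv a + rv b.
Proof. by apply/rowP => i; rewrite !mxE ffunE rmorphD. Qed.

Lemma nrm_le (v : 'rV[R]_d) X : 0 <= X -> nrm2 v <= X ^+ 2 -> nrm v <= X.
Proof. by move=> X0 h; rewrite -(ler_pXn2r (n:=2)) ?nnegrE ?nrm_ge0 // nrm_sqr. Qed.

Lemma nrm_coord (v : 'rV[R]_d) i : `|v ord0 i| <= nrm v.
Proof.
rewrite -(ler_pXn2r (n:=2)) ?nnegrE ?nrm_ge0 // nrm_sqr real_normK ?num_real //.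
rewrite /nrm2 /dot (bigD1 i) //= -expr2 lerDl sumr_ge0 // => j _.
by rewrite -expr2 sqr_ge0.
Qed.

Lemma nrm_le_coord (v : 'rV[R]_d) b : 0 <= b -> (forall i, `|v ord0 i| <= b) ->
  nrm v <= b * d%:R.
Proof.
move=> b0 h; apply: nrm_le; first by rewrite mulr_ge0.
apply: (@le_trans _ _ (\sum_(i < d) b ^+ 2)).
  apply: ler_sum => i _; rewrite -expr2 -real_normK ?num_real //.
  by rewrite ler_pXn2r ?nnegrE ?normr_ge0.
rewrite sumr_const card_ord -[_ *+ d]mulr_natr exprMn.
apply: ler_wpM2l; first exact: sqr_ge0.
have : (1 <= d%:R :> R) by rewrite ler1n.
by move=> h1; nra.
Qed.

Lemma inbox_of B y : nz y <= B%:R -> inbox B y.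
Proof.
move=> h i; rewrite -ler_norml -(ler_int R) intr_norm.
have := nrm_coord (rv y) i; rewrite mxE => h2; exact: le_trans h2 h.
Qed.

Lemma cntE B P : cnt B P = (\sum_(z : Box B) (P (toZ z) : nat))%N.
Proof.
rewrite /cnt -sum1_card big_mkcond /=; apply: eq_bigr => z _.
by rewrite inE; case: (P _).
Qed.

Lemma card_sep (V : finType) (S : {set V}) (Q : pred V) :
  #|[set u in S | Q u]| = (\sum_(u in S) (Q u : nat))%N.
Proof.
rewrite -sum1_card big_mkcond [RHS]big_mkcond /=; apply: eq_bigr => u _.
by rewrite inE; case: (u \in S); case: (Q u).
Qed.

Section Pack.
Variables (rho : R) (c : 'rV[R]_d) (L : nat).
Hypothesis rho0 : 0 < rho.
Definition K := (d * (2 * L + 5))%N.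
Definition Kr : R := K%:R.
Definition eps : R := rho / Kr.
Definition M := L.+2.

Lemma Kr_gt0 : 0 < Kr.
Proof. rewrite /Kr ltr0n /K; have := d0; lia. Qed.

Lemma eps_gt0 : 0 < eps.
Proof. by rewrite /eps divr_gt0 // Kr_gt0. Qed.

Lemma epsK : eps * Kr = rho.
Proof. by rewrite /eps mulfVK // gt_eqF // Kr_gt0. Qed.

Lemma KrE : Kr = d%:R * (2 * M%:R + 1).
Proof.
rewrite /Kr /K /M natrM; congr (_ * _).
by rewrite (_ : (2 * L + 5 = 2 * L.+2 + 1)%N) ?natrD ?natrM //; lia.
Qed.

Definition pt (y : IV) : 'rV[R]_d := eps *: rv y.

Lemma Dpt a b : D (pt a) (pt b) = eps * nz (subIV a b).
Proof. rewrite /D /pt -scalerBr nrmZ ger0_norm; [by rewrite /nz rv_sub | exact: ltW eps_gt0]. Qed.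

Definition rnd (x : 'rV[R]_d) : IV := [ffun i => Num.floor (x ord0 i / eps)].

Lemma rnd_close x : D (pt (rnd x)) x <= eps * d%:R.
Proof.
apply: nrm_le_coord; first exact: ltW eps_gt0.
move=> i; rewrite !mxE ffunE.
have := floor_itv (x ord0 i / eps); rewrite intrD => /andP[h1 h2].
have e0 := eps_gt0.
have h3 : eps * (Num.floor (x ord0 i / eps))%:~R <= x ord0 i.
  by rewrite mulrC -ler_pdivlMr.
have h4 : x ord0 i < eps * ((Num.floor (x ord0 i / eps))%:~R + 1).
  by rewrite mulrC -ltr_pdivrMr.
rewrite ler_norml; apply/andP; split; nra.
Qed.

Definition divIV (y : IV) : IV := [ffun i => (y i %/ (M%:Z))%Z].
Definition modIV (y : IV) : IV := [ffun i => (y i %% (M%:Z))%Z].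
Definition modF (y : IV) : {ffun 'I_d -> 'I_M} := [ffun i => inord (absz (modIV y i))].

Lemma M_gt0 : (0 < M)%N. Proof. by []. Qed.

Lemma modIV_ge0 y i : 0 <= modIV y i.
Proof. by rewrite ffunE modz_ge0 // eqz_nat -lt0n M_gt0. Qed.

Lemma modIV_lt y i : modIV y i < M%:Z.
Proof. by rewrite ffunE ltz_pmod // ltz_nat M_gt0. Qed.

Lemma modF_val y i : ((modF y i : nat) : int) = modIV y i.
Proof.
have h1 := modIV_ge0 y i; have h2 := modIV_lt y i.
rewrite ffunE inordK; first by rewrite gez0_abs.
move: h1 h2; rewrite /M; lia.
Qed.

Lemma divmod_inj (P : pred IV) : {in P &, injective (fun y => (divIV y, modF y))}.
Proof.
move=> a b _ _ [e1 e2]; apply/ffunP => i.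
rewrite (divz_eq (a i) M%:Z) (divz_eq (b i) M%:Z).
have := congr1 (fun f : IV => f i) e1; rewrite !ffunE => ->.
have := congr1 (fun f : {ffun 'I_d -> 'I_M} => ((f i : nat) : int)) e2; rewrite !modF_val !ffunE => ->.
by [].
Qed.

Lemma divIV_nrm (y : IV) : nz (divIV y) <= (nz y + M%:R * d%:R) / M%:R.
Proof.
have Mp : 0 < (M%:R : R) by rewrite ltr0n M_gt0.
have e : rv (divIV y) = (M%:R)^-1 *: (rv y - rv (modIV y)).
  apply/rowP => i; rewrite !mxE !ffunE.
  rewrite {2}(divz_eq (y i) M%:Z) rmorphD rmorphM /= addrK.
  by field; rewrite gt_eqF.
rewrite /nz e nrmZ ger0_norm; last by rewrite invr_ge0 ltW.
rewrite mulrC ler_pM2r ?invr_gt0 //.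
apply: le_trans (nrmD _ _) _; rewrite nrmN lerD2l.
apply: nrm_le_coord; first exact: ltW.
move=> i; rewrite mxE ger0_norm ?ler0z ?modIV_ge0 //.
have h := ltW (modIV_lt y i); rewrite -(ler_int R) in h; exact: h.
Qed.

Variables (V : finType) (S : {set V}) (q : V -> 'rV[R]_d) (m : nat).
Hypothesis hq : forall u, u \in S -> D (q u) c <= L%:R * rho.
Hypothesis hm : forall x, (#|[set u in S | (D x (q u) <= rho)%R]| <= m)%N.

Lemma packing : (#|S| <= m * M ^ d)%N.
Proof.
have e0 := eps_gt0; have K0 := Kr_gt0; have eK := epsK.
have Mp : 0 < (M%:R : R) by rewrite ltr0n M_gt0.
have dge1 : 1 <= (d%:R : R) by rewrite ler1n.
pose small : pred IV := fun y => nz y <= Kr - d%:R.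
pose ballu u : pred IV := fun z => D (pt z) (q u) <= rho.
pose big : pred IV := fun z => D (pt z) c <= (L.+1)%:R * rho.
pose Y1 : pred IV := fun y => nz y <= (L.+1)%:R * Kr + d%:R.
pose X := (L.+1)%:R * Kr + d%:R + (nrm c + (L.+1)%:R * rho) / eps.
have hKL : 0 <= (L.+1)%:R * Kr := mulr_ge0 (ler0n _ _) (ltW K0).
have hLr : 0 <= (L.+1)%:R * rho := mulr_ge0 (ler0n _ _) (ltW rho0).
have hA : 0 <= (nrm c + (L.+1)%:R * rho) / eps.
  by rewrite divr_ge0 ?addr_ge0 ?nrm_ge0 // ltW.
have X0 : 0 <= X.
  by rewrite /X !addr_ge0 // ?hA // ?hKL.
pose B := Num.Def.archi_bound X.
have XB : X <= B%:R by apply: ltW; exact: archi_boundP.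
have inbY1 : forall y, Y1 y -> inbox B y.
  move=> y hy; apply: inbox_of; apply: le_trans hy _; apply: le_trans (XB).
  by rewrite lerDl.
have inbbig : forall z, big z -> inbox B z.
  move=> z hz; apply: inbox_of; apply: le_trans (XB).
  have h1 : nz z <= (nrm c + (L.+1)%:R * rho) / eps.
    rewrite ler_pdivlMr // mulrC.
    have -> : eps * nz z = nrm (pt z - c + c).
      by rewrite subrK /pt nrmZ ger0_norm // ltW.
    apply: le_trans (nrmD _ _) _; rewrite addrC lerD2l; exact: hz.
  by apply: le_trans h1 _; rewrite lerDr addr_ge0.
have inbsmall : forall y, small y -> inbox B y.
  move=> y hy; apply: inbY1; apply: le_trans hy _; rewrite /Y1.
  have : 0 <= (L%:R : R) by [].
  rewrite -addn1 natrD; nra.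
have st2 : forall u, u \in S -> (cnt B small <= cnt B (ballu u))%N.
  move=> u uS; apply: (@cnt_le B B small (ballu u) (addIV (rnd (q u)))).
  - move=> z hz; apply: inbbig; rewrite /big.
    apply: le_trans (Dtri _ (q u) _) _.
    have := hq uS; rewrite /ballu in hz; rewrite -addn1 natrD; lra.
  - move=> a b _ _ /ffunP h; apply/ffunP => i; have := h i; rewrite !ffunE; exact: addrI.
  - move=> y hy; rewrite /ballu; apply: le_trans (Dtri _ (pt (rnd (q u))) _) _.
    rewrite Dpt (_ : subIV _ _ = y); last by apply/ffunP => i; rewrite !ffunE; ring.
    have := rnd_close (q u); rewrite /small in hy.
    have : eps * nz y <= eps * (Kr - d%:R) by rewrite ler_pM2l.
    nra.
have st3 : (\sum_(u in S) cnt B (ballu u) <= m * cnt B big)%N.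
  rewrite (eq_bigr _ (fun u _ => cntE B (ballu u))) exchange_big /= cntE big_distrr /=.
  apply: leq_sum => z _; rewrite -card_sep.
  case hb : (big (toZ z)); first by rewrite muln1 hm.
  rewrite muln0 leqn0 cards_eq0; apply/eqP/setP => u; rewrite !inE.
  apply/negP => /andP[uS hu]; move/negP: hb; apply.
  apply: le_trans (Dtri _ (q u) _) _; have := hq uS; rewrite -addn1 natrD.
  rewrite /ballu in hu; lra.
have st4 : (cnt B big <= cnt B Y1)%N.
  apply: (@cnt_le B B big Y1 (fun z => subIV z (rnd c))) => //.
  - move=> a b _ _ /ffunP h; apply/ffunP => i; have := h i; rewrite !ffunE; exact: addIr.
  - move=> z hz; rewrite /Y1.
    have h1 := Dtri (pt z) c (pt (rnd c)).
    rewrite Dpt (DC c) in h1; have := rnd_close c; rewrite /big in hz.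
    move=> h2; have h3 : eps * nz (subIV z (rnd c)) <= eps * ((L.+1)%:R * Kr + d%:R).
      by rewrite mulrDr mulrCA eK; lra.
    by rewrite ler_pM2l in h3.
have st5 : (cnt B Y1 <= cnt B small * M ^ d)%N.
  apply: (@cnt_le_mul B B M Y1 small (fun y => (divIV y, modF y))) => //.
  - exact: divmod_inj.
  - move=> y hy; rewrite /small /=; apply: le_trans (divIV_nrm y) _.
    have eM : (M%:R : R) = (L.+1)%:R + 1 by rewrite /M -[L.+2]addn1 natrD.
    rewrite ler_pdivrMr // KrE; rewrite /Y1 KrE eM in hy; rewrite eM; nra.
have st6 : (0 < cnt B small)%N.
  rewrite /cnt card_gt0; apply/set0Pn; exists (ofZ B [ffun => 0]); rewrite inE.
  rewrite toZK; last by move=> i; rewrite ffunE oppr_le0 andbT.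
  rewrite /small /nz (_ : rv _ = 0); last by apply/rowP => i; rewrite !mxE ffunE.
  rewrite /nrm /nrm2 /dot big1 ?sqrtr0 => [|i _]; last by rewrite mxE mul0r.
  rewrite KrE subr_ge0; nra.
have : (#|S| * cnt B small <= m * M ^ d * cnt B small)%N.
  have h : (\sum_(u in S) cnt B small <= \sum_(u in S) cnt B (ballu u))%N.
    by apply: leq_sum.
  rewrite sum_nat_const in h.
  apply: leq_trans h _; apply: leq_trans st3 _; rewrite -mulnA [(M ^ d * _)%N]mulnC leq_mul2l.
  by rewrite (leq_trans st4 st5) orbT.
by rewrite leq_pmul2r.
Qed.

End Pack.
End Lattice.
Section Comb.
Variables (V : finType) (e : rel V) (t : nat).

Lemma clique_Ktt (M : {set V}) :
  (forall u w, u \in M -> w \in M -> u != w -> e u w) ->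
  (2 * t <= #|M|)%N -> has_Ktt e t.
Proof.
move=> hM hc.
pose s := enum M.
have us : uniq s := enum_uniq _.
have ss : size s = #|M| by rewrite -cardE.
pose A := [set x in take t s]; pose B := [set x in take t (drop t s)].
have cA : #|A| = t.
  rewrite cardsE (card_uniqP _) ?take_uniq // size_takel //; lia.
have cB : #|B| = t.
  rewrite cardsE (card_uniqP _).
    by rewrite size_takel // size_drop; lia.
  by rewrite take_uniq // drop_uniq.
have dAB : [disjoint A & B].
  rewrite disjoint_subset; apply/subsetP => x; rewrite !inE => hA.
  apply/negP => /mem_take hB; move: us; rewrite -(cat_take_drop t s) cat_uniq => /and3P[_ /hasPn h _].
  by move: (h x hB); rewrite hA.
exists A, B; split => // a b; rewrite !inE => ha hb.
apply: hM.
- by rewrite -mem_enum (mem_take ha).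
- by rewrite -mem_enum (mem_drop (mem_take hb)).
- apply/eqP => ab; subst b.
  have hA : a \in A by rewrite inE.
  by have := disjointFr dAB hA; rewrite inE hb.
Qed.
End Comb.
Section Spheres2.
Variables (R : realType) (d : nat) (V : finType) (c : V -> 'rV[R]_d) (rho : V -> R).
Hypothesis d2 : (2 <= d)%N.
Hypothesis rpos : forall v, 0 < rho v.
Hypothesis inj : injective (fun v => (c v, rho v)).

Lemma d0' : (0 < d)%N. Proof. exact: leq_trans d2. Qed.

Lemma cont_refl u : contains c rho u u. Proof. by []. Qed.

Lemma cont_trans u v w : contains c rho u v -> contains c rho v w -> contains c rho u w.
Proof. by move=> h1 h2 x /h2 /h1. Qed.

Lemma cont_strict w u : contains c rho w u -> w != u -> rho u < rho w.
Proof.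
move=> h wu; have := ball_incl d0' (rpos u) (rpos w) h.
rewrite lt_neqAle => h1; apply/andP; split; last by have := D_ge0 (c u) (c w); lra.
apply/negP => /eqP e; have h2 : D (c u) (c w) = 0.
  by apply/eqP; rewrite eq_le D_ge0 andbT; rewrite e in h1; lra.
have ec : c u = c w by apply/eqP; rewrite -subr_eq0; apply/eqP; apply: nrm_eq0.
by move/eqP: wu; apply; apply: inj; rewrite /= ec e.
Qed.

Lemma exists_max_seq (s : seq V) : s != [::] ->
  exists2 w, w \in s & forall w', w' \in s -> rho w' <= rho w.
Proof.
elim: s => [//|x s IH] _; case: (eqVneq s [::]) => [->|sn].
  by exists x; rewrite ?inE // => w'; rewrite inE => /eqP ->.
have [w ws hw] := IH sn.
case: (lerP (rho x) (rho w)) => hx.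
  exists w; first by rewrite inE ws orbT.
  by move=> w'; rewrite inE => /orP[/eqP ->|/hw].
exists x; first by rewrite inE eqxx.
move=> w'; rewrite inE => /orP[/eqP -> //|/hw h]; exact: le_trans h (ltW hx).
Qed.

Lemma exists_max (P : {set V}) u : u \in P ->
  exists2 w, w \in P & forall w', w' \in P -> rho w' <= rho w.
Proof.
move=> uP; have : enum P != [::].
  by apply/eqP => h; move: uP; rewrite -mem_enum h.
move/exists_max_seq => [w]; rewrite mem_enum => wP hw; exists w => // w'.
by rewrite -mem_enum; exact: hw.
Qed.

Lemma meet_edge x u w : dist2 x (c u) <= rho u ^+ 2 -> dist2 x (c w) <= rho w ^+ 2 ->
  u != w -> ~ contains c rho u w -> ~ contains c rho w u -> sphere_graph c rho u w.
Proof.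
move=> hu hw uw n1 n2; rewrite /sphere_graph uw /=; apply/asboolP.
exact: (sphere_meet d2 (rpos u) (rpos w) hu hw n2 n1).
Qed.

Variable (t : nat).
Hypothesis t0 : (0 < t)%N.
Hypothesis noK : ~ has_Ktt (sphere_graph c rho) t.

Lemma mult_ind k : forall T : {set V},
  (forall u w, u \in T -> w \in T -> u != w -> ~ contains c rho u w ->
     ~ contains c rho w u -> sphere_graph c rho u w) ->
  (forall A : {set V}, A \subset T -> nested c rho A -> (#|A| <= k)%N) ->
  (#|T| <= k * (2 * t - 1))%N.
Proof.
elim: k => [|k IH] T hT hN.
  rewrite mul0n leqn0 cards_eq0; apply/eqP/setP => u; rewrite inE.
  apply/negP => uT.
  have n1 : nested c rho [set u].
    by move=> a b; rewrite !inE => /eqP -> /eqP ->; rewrite eqxx.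
  by have := hN [set u]; rewrite sub1set uT cards1 => /(_ isT n1).
pose Mx := [set u in T | [forall w, ((w \in T) && (w != u)) ==> ~~ `[< contains c rho w u >]]].
have hMx : (#|Mx| <= 2 * t - 1)%N.
  rewrite leqNgt; apply/negP => h; apply: noK; apply: (clique_Ktt (M := Mx)); last by lia.
  move=> u w; rewrite !inE => /andP[uT /forallP hu] /andP[wT /forallP hw] uw.
  apply: hT => //.
  - by move=> hc; have := hw u; rewrite uT uw /= => /negP; apply; apply/asboolP.
  - by move=> hc; have := hu w; rewrite wT eq_sym uw /= => /negP; apply; apply/asboolP.
have hT' : (#|T :\: Mx| <= k * (2 * t - 1))%N.
  apply: IH.
    by move=> u w; rewrite !inE => /andP[_ uT] /andP[_ wT]; exact: hT.
  move=> A sA nA.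
  case: (set_0Vmem A) => [->|[a0 a0A]]; first by rewrite cards0.
  have [a1 a1A ha1] := exists_max a0A.
  have top : forall a, a \in A -> contains c rho a1 a.
    move=> a aA; case: (eqVneq a a1) => [->|aa1]; first exact: cont_refl.
    case: (nA _ _ aA a1A aa1) => // h.
    by have := cont_strict h aa1; have := ha1 _ aA; lra.
  pose W := [set w in T | `[< contains c rho w a1 >]].
  have a1T : a1 \in T by have := subsetP sA _ a1A; rewrite inE => /andP[].
  have a1W : a1 \in W by rewrite inE a1T; apply/asboolP; exact: cont_refl.
  have [w1 w1W hw1] := exists_max a1W.
  move: (w1W); rewrite inE => /andP[w1T /asboolP w1a1].
  have w1M : w1 \in Mx.
    rewrite inE w1T; apply/forallP => w; apply/implyP => /andP[wT ww1].
    apply/negP => /asboolP hc.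
    have wW : w \in W by rewrite inE wT; apply/asboolP; exact: cont_trans hc w1a1.
    by have := cont_strict hc ww1; have := hw1 _ wW; lra.
  have w1A : w1 \notin A.
    by apply/negP => /(subsetP sA); rewrite inE w1M.
  have : (#|w1 |: A| <= k.+1)%N.
    apply: hN.
      apply/subsetP => x; rewrite !inE => /orP[/eqP ->//|/(subsetP sA)].
      by rewrite inE => /andP[].
    move=> x y; rewrite !inE => /orP[/eqP ->|xA] /orP[/eqP ->|yA] xy.
    - by rewrite eqxx in xy.
    - by left; exact: cont_trans w1a1 (top _ yA).
    - by right; exact: cont_trans w1a1 (top _ xA).
    - exact: nA.
  by rewrite cardsU1 w1A.
have := cardsID Mx T; rewrite (setIidPr _); last first.
  by apply/subsetP => u; rewrite inE => /andP[].
move=> <-; rewrite mulSn; exact: leq_add.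
Qed.

End Spheres2.
Section Order.
Variables (R : realType) (V : finType) (f : V -> R).

Lemma sort_perm : exists s : {perm V}, forall a b, (pos s a <= pos s b)%N -> f b <= f a.
Proof.
pose leT : rel V := fun a b => f b <= f a.
pose L := sort leT (enum V).
have memL : forall a, a \in L by move=> a; rewrite mem_sort mem_enum.
have sL : size L = #|V| by rewrite size_sort cardE.
have hidx : forall a, (index a L < #|V|)%N by move=> a; rewrite -sL index_mem.
pose g (a : V) : V := enum_val (Ordinal (hidx a)).
have ginj : injective g.
  move=> a b /(congr1 enum_rank); rewrite /g !enum_valK => /(congr1 val) /= h.
  by rewrite -(nth_index a (memL a)) h nth_index.
exists (perm ginj) => a b; rewrite /pos !permE /g !enum_valK /= => h.
apply: (sorted_leq_index (leT := leT)) => //.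
- by move=> x y z; rewrite /leT => h1 h2; exact: le_trans h2 h1.
- by move=> x; rewrite /leT.
- by apply: sort_sorted => x y; rewrite /leT le_total.
Qed.
End Order.
Section Final.
Variables (R : realType) (d : nat) (V : finType) (c : V -> 'rV[R]_d) (rho : V -> R).
Hypothesis d2 : (2 <= d)%N.
Hypothesis rpos : forall v, 0 < rho v.
Notation e := (sphere_graph c rho).

Lemma edge_meet a b : e a b -> spheres_meet c rho a b.
Proof. by case/andP => _ /asboolP. Qed.

Lemma path_bound v (p : seq V) : forall w a, 0 <= a -> D (c w) (c v) <= a ->
  rho w <= rho v -> path e w p -> all (fun x => rho x <= rho v) (belast w p) ->
  p != [::] ->
  exists y, dist2 y (c (last w p)) = rho (last w p) ^+ 2 /\
    D y (c v) + rho v <= a + 2 * rho v * (size p)%:R.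
Proof.
elim: p => [//|x p IH] w a a0 hw rw /= /andP[ewx pp] /andP[_ hall] _.
have [y0 [h1 h2]] := edge_meet ewx.
move/(dist2_eq _ _ (ltW (rpos w))): h1 => h1.
move/(dist2_eq _ _ (ltW (rpos x))): h2 => h2.
have hy0 : D y0 (c v) <= rho w + a.
  by apply: le_trans (Dtri _ (c w) _) _; rewrite h1 lerD2l.
case: (eqVneq p [::]) => [pe|pn].
  subst p; exists y0; split; first by apply/dist2_eq => //; exact: ltW.
  by rewrite /= mulr1; lra.
have rx : rho x <= rho v by case: p pn hall {IH pp} => [//|z p] _ /= /andP[].
have hx : D (c x) (c v) <= a + 2 * rho v.
  apply: le_trans (Dtri _ y0 _) _; rewrite DC h2; lra.
have a2 : 0 <= a + 2 * rho v by have := rpos v; lra.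
have [y [hy1 hy2]] := IH x (a + 2 * rho v) a2 hx rx pp hall pn.
exists y; split => //; apply: le_trans hy2 _; rewrite /= -addn1 natrD; lra.
Qed.

Lemma sphere_pt v : exists y, dist2 y (c v) = rho v ^+ 2.
Proof.
have d0 : (0 < d)%N by apply: leq_trans d2.
exists (c v + rho v *: delta_mx ord0 (Ordinal d0)).
by rewrite dist2E addrC addKr nrm2Z /nrm2 dot_delta mxE !eqxx mulr1.
Qed.

Lemma q_exists u v y : rho v <= rho u -> dist2 y (c u) = rho u ^+ 2 ->
  exists q, D q (c v) <= D y (c v) + rho v /\
    forall x, D x q <= rho v -> dist2 x (c u) <= rho u ^+ 2.
Proof.
move=> ruv hy; have ru := rpos u; have rv := rpos v.
have hy' : D y (c u) = rho u by apply/dist2_eq => //; exact: ltW.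
pose b := (rho u - rho v) / rho u.
exists (c u + b *: (y - c u)); split.
  rewrite {1}/D; have -> : c u + b *: (y - c u) - c v = (y - c v) + (rho v / rho u) *: (c u - y).
    by apply/rowP => i; rewrite !mxE /b; field; rewrite (gt_eqF ru).
  apply: le_trans (nrmD _ _) _; rewrite lerD2l nrmZ -/(D _ _) DC hy'.
  rewrite ger0_norm; last by rewrite divr_ge0 // ltW.
  have -> : rho v / rho u * rho u = rho v by field; rewrite (gt_eqF ru).
  by [].
move=> x hx; rewrite (dist2_le _ _ (ltW ru)); apply: le_trans (Dtri _ (c u + b *: (y - c u)) _) _.
have -> : D (c u + b *: (y - c u)) (c u) = rho u - rho v.
  rewrite /D addrC addKr nrmZ -/(D _ _) hy' ger0_norm /b; last by rewrite divr_ge0 ?subr_ge0 // ltW.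
  by field; rewrite (gt_eqF ru).
lra.
Qed.

Variable (s : {perm V}).
Hypothesis hs : forall a b, (pos s a <= pos s b)%N -> rho b <= rho a.
Variable (r : nat).
Hypothesis r0 : (0 < r)%N.

Lemma reach_bound v u : sreach e r s v u ->
  rho v <= rho u /\ exists y, dist2 y (c u) = rho u ^+ 2 /\
     D y (c v) + rho v <= 2 * r%:R * rho v.
Proof.
case/andP => puv /existsP[m /existsP[p /and4P[pp /eqP lp _ hall]]].
split; first exact: hs.
have rv := rpos v.
have r1 : 1 <= (r%:R : R) by rewrite ler1n.
have hall' : all (fun x => rho x <= rho v) (belast v p).
  by apply: sub_all hall => x /= /hs.
case: (eqVneq (tval p) [::]) => [pe|pn].
  move: lp; rewrite pe /= => <-.
  have [y hy] := sphere_pt v; exists y; split => //.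
  have -> : D y (c v) = rho v by apply/dist2_eq => //; exact: ltW.
  nra.
have := path_bound (le_refl 0) _ (le_refl (rho v)) pp hall' pn.
rewrite /D subrr /nrm /nrm2 /dot big1 ?sqrtr0 => [/(_ (le_refl 0))|i _]; last by rewrite mxE mul0r.
rewrite lp => -[y [hy1 hy2]]; exists y; split => //; apply: le_trans hy2 _.
have : ((size p)%:R : R) <= r%:R by rewrite ler_nat size_tuple -ltnS.
nra.
Qed.
End Final.
Lemma bigminn_le_seq (I : eqType) (F : I -> nat) x i (rr : seq I) :
  i \in rr -> (\big[minn/x]_(j <- rr) F j <= F i)%N.
Proof.
elim: rr => [//|a rr IH]; rewrite inE big_cons => /orP[/eqP <-|h].
  exact: geq_minl.
exact: leq_trans (geq_minr _ _) (IH h).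
Qed.

Unset Implicit Arguments. Set Strict Implicit.

Theorem lemma4p3 (R : realType) (d t k : nat) (V : finType)
    (c : V -> 'rV[R]_d) (rho : V -> R) :
  (2 <= d)%N -> (0 < t)%N -> (0 < k)%N ->
  (forall v, 0 < rho v) ->
  injective (fun v => (c v, rho v)) ->
  ~ has_Ktt (sphere_graph c rho) t ->
  (forall A : {set V}, nested c rho A -> (#|A| <= k)%N) ->
  forall r : nat, (0 < r)%N ->
    (scol (sphere_graph c rho) r <= 2 * k * t * (2 * r + 2) ^ d)%N.
Proof.
move=> d2 t0 k0 rpos inj noK nk r r0.
have d0 : (0 < d)%N by apply: leq_trans d2.
have [s hs] := sort_perm rho.
have mp : forall x, (#|[set u | (dist2 x (c u) <= rho u ^+ 2)%R]| <= k * (2 * t - 1))%N.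
  move=> x; apply: (mult_ind d2 rpos inj t0 noK).
    move=> u w; rewrite !inE => hu hw uw n1 n2; exact: (meet_edge d2 rpos hu hw uw n1 n2).
  by move=> A _ /nk.
have wb : (width (sphere_graph c rho) r s <= k * (2 * t - 1) * (2 * r + 2) ^ d)%N.
  apply/bigmax_leqP => v _.
  pose Rs := [set u | sreach (sphere_graph c rho) r s v u].
  have hq : forall u, exists q, u \in Rs -> (D q (c v) <= (2 * r)%:R * rho v)%R /\
      forall x, (D x q <= rho v)%R -> (dist2 x (c u) <= rho u ^+ 2)%R.
    move=> u; case: (boolP (u \in Rs)) => [uR|_]; last by exists 0.
    move: (uR); rewrite inE => /(reach_bound d2 rpos hs r0) [ruv [y [hy1 hy2]]].
    have [q [hq1 hq2]] := q_exists rpos ruv hy1.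
    exists q => _; split => //; rewrite natrM; exact: le_trans hq1 hy2.
  have [qf hqf] := choice hq.
  have := @packing R d d0 (rho v) (c v) (2 * r) (rpos v) V Rs qf (k * (2 * t - 1)).
  rewrite /M addn2; apply.
    by move=> u /hqf [].
  move=> x; apply: leq_trans (mp x); apply: subset_leq_card; apply/subsetP => u.
  move/setIdP => [uR hx]; have [_ h] := hqf u uR; rewrite inE; exact: h hx.
rewrite /scol; apply: leq_trans (bigminn_le_seq _ _ (mem_index_enum s)) _.
apply: leq_trans wb _; apply: leq_mul => //; lia.
Qed.
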